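(* Every integral non-associative algebra is semi-associative: if $\mathcal A$ is a non-associative algebra such that $x;y=0$ implies $x=0$ or $y=0$, then $x;(1;1)=(x;1);1$ for all $x\in A$.
   Context: A non-associative algebra is an algebra $(A,0,1,+,-,1',\breve{\ },;)$ such that $(A,0,1,+,-)$ is a boolean algebra (with $x\cdot y=-(-x+-y)$ and $x\le y\iff x+y=y$); $1';x=x=x;1'$, $\breve{\breve x}=x$, $(x;y)\breve{}=\breve y;\breve x$; $\breve 0=x;0=0$, $(x+y)\breve{}=\breve x+\breve y$, $x;(y+z)=x;y+x;z$; and the Peircean law holds: $x;y\cdot\breve z=0$ iff $y;z\cdot\breve x=0$. *)

(* Defs.v *)
(* Signature (A,0,1,+,-,1',converse,;) *)
Record NAAlgebra := {
  carrier :> Type;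
  zero : carrier;
  one : carrier;
  join : carrier -> carrier -> carrier;
  compl : carrier -> carrier;
  ident : carrier;
  conv : carrier -> carrier;
  comp : carrier -> carrier -> carrier
}.

Definition meet (A : NAAlgebra) (x y : A) : A :=
  compl A (join A (compl A x) (compl A y)).

Definition le (A : NAAlgebra) (x y : A) : Prop := join A x y = y.

Definition is_boolean_algebra (A : NAAlgebra) : Prop :=
  (forall x y : A, join A x y = join A y x) /\
  (forall x y : A, @meet A x y = @meet A y x) /\
  (forall x y z : A, join A x (join A y z) = join A (join A x y) z) /\
  (forall x y z : A, @meet A x (@meet A y z) = @meet A (@meet A x y) z) /\
  (forall x y z : A, join A x (@meet A y z) = @meet A (join A x y) (join A x z)) /\
  (forall x y z : A, @meet A x (join A y z) = join A (@meet A x y) (@meet A x z)) /\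
  (forall x : A, join A x (zero A) = x) /\
  (forall x : A, @meet A x (one A) = x) /\
  (forall x : A, join A x (compl A x) = one A) /\
  (forall x : A, @meet A x (compl A x) = zero A).

Definition is_nonassociative_algebra (A : NAAlgebra) : Prop :=
  is_boolean_algebra A /\
  (forall x : A, comp A (ident A) x = x /\ comp A x (ident A) = x) /\
  (forall x : A, conv A (conv A x) = x) /\
  (forall x y : A, conv A (comp A x y) = comp A (conv A y) (conv A x)) /\
  (conv A (zero A) = zero A) /\
  (forall x : A, comp A x (zero A) = zero A) /\
  (forall x y : A, conv A (join A x y) = join A (conv A x) (conv A y)) /\
  (forall x y z : A, comp A x (join A y z) = join A (comp A x y) (comp A x z)) /\
  (forall x y z : A,
      @meet A (comp A x y) (conv A z) = zero A <->
      @meet A (comp A y z) (conv A x) = zero A).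

Definition integral (A : NAAlgebra) : Prop :=
  forall x y : A, comp A x y = zero A -> x = zero A \/ y = zero A.

Definition semi_associative (A : NAAlgebra) : Prop :=
  forall x : A, comp A x (comp A (one A) (one A)) = comp A (comp A x (one A)) (one A).

(* Main.v *)
Require Import Defs.

Theorem mainTheorem3 (A : NAAlgebra) :
  is_nonassociative_algebra A -> integral A -> semi_associative A.
Proof.
  intros [[jC [mC [jA [mA [jD [mD [j0 [m1 [jc mc]]]]]]]]]
         [idl [cc [cm [c0 [x0 [cj [cD peirce]]]]]]]] Hint x.
  assert (top : forall a : A, join A a (one A) = one A).
  { intro a. transitivity (meet A (join A a (one A)) (join A a (compl A a))).
    { rewrite jc. symmetry. apply m1. }
    rewrite <- jD. rewrite mC. rewrite m1. apply jc. }
  assert (c1 : conv A (one A) = one A).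
  { assert (H := top (conv A (one A))). rewrite jC in H.
    assert (H2 : conv A (join A (one A) (conv A (one A))) = conv A (one A)) by (rewrite H; reflexivity).
    rewrite cj, cc in H2. rewrite <- H2. apply top. }
  assert (z0 : forall a : A, comp A (zero A) a = zero A).
  { intro a. rewrite <- (cc (comp A (zero A) a)). rewrite cm, c0, x0. exact c0. }
  assert (o11 : comp A (one A) (one A) = one A).
  { transitivity (comp A (one A) (join A (one A) (ident A))).
    { rewrite jC, top. reflexivity. }
    rewrite cD.
    destruct (idl (one A)) as [_ H]. rewrite H. apply top. }
  assert (Hx : x = zero A \/ comp A x (one A) = one A).
  { set (y := compl A (comp A x (one A))).
    assert (H1 : meet A (comp A x (one A)) (conv A (conv A y)) = zero A).
    { rewrite cc. apply mc. }
    apply (proj1 (peirce _ _ _)) in H1.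
    assert (H3 : meet A (comp A (conv A y) x) (conv A (one A)) = zero A) by (apply (proj1 (peirce _ _ _)); exact H1).
    rewrite c1, m1 in H3. clear H1. rename H3 into H1.
    destruct (Hint _ _ H1) as [Hy | Hy].
    - right. assert (y = zero A) by (rewrite <- (cc y), Hy; exact c0).
      rewrite <- (j0 (comp A x (one A))). rewrite <- H. apply jc.
    - left. exact Hy. }
  unfold semi_associative. rewrite o11.
  destruct Hx as [-> | ->].
  - rewrite !z0. reflexivity.
  - symmetry. exact o11.
Qed.
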